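(* Let $G$ be a torsion abelian group with $G=H+K$ for subgroups $H,K\leq G$, and let $\varphi\colon G\to G$ be an endomorphism with $\varphi H\subseteq H$ and $\varphi K\subseteq K$. If the restrictions $\varphi|_H\colon H\to H$ and $\varphi|_K\colon K\to K$ are positively expansive endomorphisms, then $\varphi$ is positively expansive. Analogously, if $\varphi$ is an automorphism whose restrictions $\varphi|_H$ and $\varphi|_K$ are expansive automorphisms of $H$ and $K$, then $\varphi$ is an expansive automorphism.
   Context: $\mathbb N=\{0,1,2,\dots\}$. An endomorphism $\varphi$ of an abelian group $G$ is positively expansive if there is a finite subgroup $S\leq G$ such that for every finite subgroup $F\leq G$ there is $n\in\mathbb N$ with $F\subseteq\sum_{k=0}^n\varphi^kS$. An automorphism $\varphi$ is expansive if there is a finite subgroup $S\leq G$ such that for every finite subgroup $F\leq G$ there is $n\in\mathbb N$ with $F\subseteq\sum_{|k|\leq n}\varphi^kS$. *)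

(* Defs.v *)
From HB Require Import structures.
From mathcomp Require Import all_boot all_order all_algebra.
Set Implicit Arguments. Unset Strict Implicit. Unset Printing Implicit Defensive.
Import GRing.Theory.
Local Open Scope ring_scope.

Section Defs.
Variable G : zmodType.

Definition is_subgroup (H : G -> Prop) : Prop :=
  H 0 /\ (forall x y, H x -> H y -> H (x - y)).

Definition finite_set (A : G -> Prop) : Prop :=
  exists s : seq G, forall x, A x <-> x \in s.

Definition finite_subgroup_of (H F : G -> Prop) : Prop :=
  [/\ is_subgroup F, finite_set F & forall x, F x -> H x].

Definition torsion_group : Prop :=
  forall x : G, exists n : nat, (0 < n)%N /\ x *+ n = 0.

(* sum_{k=0}^n phi^k S *)
Definition pos_orbit_sum (phi : G -> G) (S : G -> Prop) (n : nat) (x : G) :=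
  exists g : nat -> G, (forall k, (k <= n)%N -> S (g k)) /\
    x = \sum_(k < n.+1) iter k phi (g k).

(* sum_{|k|<=n} phi^k S, where psi = phi^{-1} *)
Definition orbit_sum (phi psi : G -> G) (S : G -> Prop) (n : nat) (x : G) :=
  exists g h : nat -> G,
    (forall k, (k <= n)%N -> S (g k) /\ S (h k)) /\
    x = \sum_(k < n.+1) (iter k phi (g k) + iter k psi (h k)).

(* The restriction of phi to the phi-invariant subgroup H is positively
   expansive (finite subgroups of H are the finite subgroups of G inside H). *)
Definition pos_expansive_on (H : G -> Prop) (phi : G -> G) : Prop :=
  exists S, finite_subgroup_of H S /\
    forall F, finite_subgroup_of H F ->
      exists n : nat, forall x, F x -> pos_orbit_sum phi S n x.

Definition expansive_on (H : G -> Prop) (phi psi : G -> G) : Prop :=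
  exists S, finite_subgroup_of H S /\
    forall F, finite_subgroup_of H F ->
      exists n : nat, forall x, F x -> orbit_sum phi psi S n x.

Definition pos_expansive (phi : G -> G) := pos_expansive_on (fun _ => True) phi.
Definition expansive (phi psi : G -> G) := expansive_on (fun _ => True) phi psi.

End Defs.

(* Main.v *)
Require Import Defs.
From HB Require Import structures.
From mathcomp Require Import all_boot all_order all_algebra.
Import GRing.Theory.
Local Open Scope ring_scope.
Set Implicit Arguments. Unset Strict Implicit.

Section Aux.
Variable G : zmodType.
Implicit Types (H K S F : G -> Prop).

Lemma sg_add H : is_subgroup H -> forall x y, H x -> H y -> H (x + y).
Proof.
move=> [H0 HB] x y hx hy.
have := HB x (0 - y) hx (HB _ _ H0 hy). by rewrite sub0r opprK.
Qed.

Lemma sg_muln H : is_subgroup H -> forall x c, H x -> H (x *+ c).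
Proof.
move=> sH x c hx; elim: c => [|c IH]; first by rewrite mulr0n; case: sH.
by rewrite mulrS; apply: sg_add.
Qed.

Lemma ext_sub H F' h : torsion_group G -> is_subgroup H ->
  finite_subgroup_of H F' -> H h ->
  exists F, finite_subgroup_of H F /\ F h /\ (forall y, F' y -> F y).
Proof.
move=> tor sH [[F0 FB] [l Hl] FH] hh.
have [n [n0 hn]] := tor h.
have Emod : forall m, h *+ (m %% n) = h *+ m.
  by move=> m; rewrite [in RHS](divn_eq m n) mulrnDr mulnC mulrnA hn mul0rn add0r.
exists (fun x => exists c y, (c < n)%N /\ F' y /\ x = h *+ c + y).
split; last split.
- split; first split.
  + by exists 0%N, 0; rewrite mulr0n addr0.
  + move=> x y [a [x' [ha [hx' ->]]]] [b [y' [hb [hy' ->]]]].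
    exists ((a + (n - b)) %% n)%N, (x' - y'); split; [by rewrite ltn_mod|split; first exact: FB].
    have E := Emod (a + (n - b))%N.
    have E2 : h *+ (n - b) = - (h *+ b).
      apply/eqP; rewrite -subr_eq0 opprK -mulrnDr subnK ?hn // ltnW //.
    by rewrite E mulrnDr E2 opprD addrACA.
  + exists [seq h *+ c + y | c <- iota 0 n, y <- l] => x; split.
    * move=> [c [y [hc [hy ->]]]]; apply/allpairsP; exists (c, y) => /=.
      by split=> //; [rewrite mem_iota add0n | apply/Hl].
    * move/allpairsP=> [[c y] /= [hc hy ->]]; exists c, y.
      by move: hc; rewrite mem_iota add0n => /andP[_ hc]; split=> //; split=> //; apply/Hl.
  + move=> x [c [y [_ [hy ->]]]]; apply: sg_add => //; [exact: sg_muln | exact: FH].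
- by exists (1 %% n)%N, 0; rewrite addr0 Emod mulr1n ltn_mod; split=> //; split=> //; case: F0.
- by move=> y hy; exists 0%N, y; rewrite mulr0n add0r.
Qed.

Lemma zero_sub H : is_subgroup H -> finite_subgroup_of H (fun x => x = 0).
Proof.
move=> sH; split.
- by split=> // x y -> ->; rewrite subr0.
- by exists [:: 0] => x; rewrite inE; split => [->|/eqP].
- by move=> x ->; case: sH.
Qed.

Lemma decomp H K (s : seq G) : torsion_group G -> is_subgroup H -> is_subgroup K ->
  (forall x : G, exists h k, H h /\ K k /\ x = h + k) ->
  exists FH FK, finite_subgroup_of H FH /\ finite_subgroup_of K FK /\
    forall x, x \in s -> exists h k, FH h /\ FK k /\ x = h + k.
Proof.
move=> tor sH sK dec; elim: s => [|x s [FH [FK [fH [fK IH]]]]].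
  by exists (fun x => x = 0), (fun x => x = 0); split; [exact: zero_sub|split; [exact: zero_sub|]].
have [h [k [hh [kk ->]]]] := dec x.
have [FH' [fH' [hH' sH']]] := ext_sub tor sH fH hh.
have [FK' [fK' [kK' sK']]] := ext_sub tor sK fK kk.
exists FH', FK'; split=> //; split=> // y; rewrite inE => /orP[/eqP ->|ys].
  by exists h, k.
have [a [b [ha [hb ->]]]] := IH y ys; exists a, b; split; [exact: sH'|split=> //; exact: sK'].
Qed.

Definition sumset S1 S2 (x : G) := exists a b, S1 a /\ S2 b /\ x = a + b.

Lemma sumset_sub S1 S2 : finite_subgroup_of (fun _ => True) S1 ->
  finite_subgroup_of (fun _ => True) S2 -> finite_subgroup_of (fun _ => True) (sumset S1 S2).
Proof.
move=> [[A0 AB] [l1 H1] _] [[B0 BB] [l2 H2] _]; split=> //.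
- split; first by exists 0, 0; rewrite addr0.
  move=> x y [a [b [ha [hb ->]]]] [a' [b' [ha' [hb' ->]]]].
  exists (a - a'), (b - b'); split; [exact: AB|split; [exact: BB|]].
  by rewrite opprD addrACA.
- exists [seq a + b | a <- l1, b <- l2] => x; split.
  + move=> [a [b [ha [hb ->]]]]; apply/allpairsP; exists (a, b).
    by split; [apply/H1|apply/H2|].
  + by move/allpairsP=> [[a b] /= [ha hb ->]]; exists a, b; split; [apply/H1|split; [apply/H2|]].
Qed.

Lemma main_gen (O : (G -> Prop) -> nat -> G -> Prop) H K :
  torsion_group G -> is_subgroup H -> is_subgroup K ->
  (forall x : G, exists h k, H h /\ K k /\ x = h + k) ->
  (forall S n m x, S 0 -> (n <= m)%N -> O S n x -> O S m x) ->
  (forall S1 S2 n a b, O S1 n a -> O S2 n b -> O (sumset S1 S2) n (a + b)) ->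
  (exists S, finite_subgroup_of H S /\ forall F, finite_subgroup_of H F ->
      exists n : nat, forall x, F x -> O S n x) ->
  (exists S, finite_subgroup_of K S /\ forall F, finite_subgroup_of K F ->
      exists n : nat, forall x, F x -> O S n x) ->
  (exists S, finite_subgroup_of (fun _ => True) S /\
     forall F, finite_subgroup_of (fun _ => True) F ->
      exists n : nat, forall x, F x -> O S n x).
Proof.
move=> tor sH sK dec mono add [SH [fSH cH]] [SK [fSK cK]].
have fSH' : finite_subgroup_of (fun _ => True) SH by case: fSH.
have fSK' : finite_subgroup_of (fun _ => True) SK by case: fSK.
exists (sumset SH SK); split; first exact: sumset_sub.
move=> F [_ [s Hs] _].
have [FH [FK [fH [fK D]]]] := decomp s tor sH sK dec.
have [n1 c1] := cH _ fH; have [n2 c2] := cK _ fK.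
exists (maxn n1 n2) => x /Hs xs.
have [h [k [hh [kk ->]]]] := D x xs.
have SH0 : SH 0 by case: fSH => [[]].
have SK0 : SK 0 by case: fSK => [[]].
apply: add; [apply: mono (c1 _ hh) | apply: mono (c2 _ kk)] => //;
  [exact: leq_maxl | exact: leq_maxr].
Qed.

Lemma iter_add (f : G -> G) : (forall a b, f (a + b) = f a + f b) ->
  forall k a b, iter k f (a + b) = iter k f a + iter k f b.
Proof. by move=> fD; elim=> //= k IH a b; rewrite IH fD. Qed.

Lemma iter_0 (f : G -> G) : f 0 = 0 -> forall k, iter k f 0 = 0.
Proof. by move=> f0; elim=> //= k ->. Qed.

Lemma widen_sum (F : nat -> G) n m : (n <= m)%N -> (forall k, (n < k)%N -> F k = 0) ->
  \sum_(k < n.+1) F k = \sum_(k < m.+1) F k.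
Proof.
move=> le F0; rewrite (big_ord_widen m.+1 F) // big_mkcond; apply: eq_bigr => i _.
by case: ifP => // /negbT; rewrite -leqNgt => /F0 ->.
Qed.

End Aux.

Theorem proposition2p8 (G : zmodType) (H K : G -> Prop) :
  torsion_group G ->
  is_subgroup H -> is_subgroup K ->
  (forall x : G, exists h k, H h /\ K k /\ x = h + k) ->
  (forall phi : {additive G -> G},
     (forall x, H x -> H (phi x)) -> (forall x, K x -> K (phi x)) ->
     pos_expansive_on H phi -> pos_expansive_on K phi ->
     pos_expansive phi) /\
  (forall (phi : {additive G -> G}) (psi : G -> G),
     cancel phi psi -> cancel psi phi ->
     (forall x, H x -> H (phi x)) -> (forall x, H x -> H (psi x)) ->
     (forall x, K x -> K (phi x)) -> (forall x, K x -> K (psi x)) ->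
     expansive_on H phi psi -> expansive_on K phi psi ->
     expansive phi psi).
Proof.
move=> tor sH sK dec; split.
- move=> phi _ _ eH eK.
  have pD : forall a b, phi (a + b) = phi a + phi b by move=> a b; rewrite raddfD.
  have p0 : phi 0 = 0 by rewrite raddf0.
  apply: (main_gen (O := pos_orbit_sum phi) tor sH sK dec) => //.
  + move=> S n m x S0 le [g [hg ->]].
    exists (fun k => if (k <= n)%N then g k else 0); split.
      by move=> k _; case: ifP => // /hg.
    rewrite -(widen_sum (F := fun k => iter k phi (if (k <= n)%N then g k else 0)) le).
      by apply: eq_bigr => i _; rewrite -ltnS ltn_ord.
    by move=> k; rewrite ltnNge => /negbTE ->; rewrite iter_0.
  + move=> S1 S2 n a b [g [hg ->]] [g' [hg' ->]].
    exists (fun k => g k + g' k); split.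
      by move=> k kn; exists (g k), (g' k); split; [exact: hg|split; [exact: hg'|]].
    by rewrite -big_split; apply: eq_bigr => i _; rewrite iter_add.
- move=> phi psi c1 c2 _ _ _ _ eH eK.
  have pD : forall a b, phi (a + b) = phi a + phi b by move=> a b; rewrite raddfD.
  have p0 : phi 0 = 0 by rewrite raddf0.
  have qD : forall a b, psi (a + b) = psi a + psi b.
    by move=> a b; apply: (can_inj c1); rewrite c2 pD !c2.
  have q0 : psi 0 = 0 by apply: (can_inj c1); rewrite c2 p0.
  apply: (main_gen (O := orbit_sum phi psi) tor sH sK dec) => //.
  + move=> S n m x S0 le [g [h [hg ->]]].
    exists (fun k => if (k <= n)%N then g k else 0), (fun k => if (k <= n)%N then h k else 0); split.
      by move=> k _; case: ifP => // /hg.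
    rewrite -(widen_sum (F := fun k => iter k phi (if (k <= n)%N then g k else 0)
                                   + iter k psi (if (k <= n)%N then h k else 0)) le).
      by apply: eq_bigr => i _; rewrite -ltnS ltn_ord.
    by move=> k; rewrite ltnNge => /negbTE ->; rewrite !iter_0 ?addr0.
  + move=> S1 S2 n a b [g [h [hg ->]]] [g' [h' [hg' ->]]].
    exists (fun k => g k + g' k), (fun k => h k + h' k); split.
      move=> k kn; have [? ?] := hg k kn; have [? ?] := hg' k kn.
      by split; [exists (g k), (g' k) | exists (h k), (h' k)].
    rewrite -big_split; apply: eq_bigr => i _; rewrite !iter_add //.
    by rewrite addrACA.
Qed.
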